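(* Let $M$ be a matroid of rank $r$ on a finite linearly ordered set $E$. Then $\mathcal U^*(M)$ is an antichain (no member is properly contained in another).
   Context: The graded lexicographic order on $2^E$: $X\prec Y$ if $|X|<|Y|$, or $|X|=|Y|$ and $\min(X\triangle Y)\in X$; for nonempty $\mathcal X\subseteq 2^E$, $\min\mathcal X$ is its $\prec$-smallest member. A set $X$ is $k$-closed in $M$ if $\mathrm{cl}_M(Y)\subseteq X$ for all $Y\subseteq X$ with $|Y|\le k$; $\mathrm{cl}_k(X)$ is the intersection of all $k$-closed sets containing $X$ (for $k<0$ every set is $k$-closed, so $\mathrm{cl}_{-1}(X)=X$). For a flat $F$ of $M$ of rank $k$, $U^*_F=\min\{U : \mathrm{cl}_{k-1}(U)=F\}$. For $0\le k\le r-1$, $\mathcal U^*_k=\{U^*_F : F \text{ a flat of rank } k,\ |U^*_F|>k\}$, and $\mathcal U^*(M)=\bigcup_{k=0}^{r-1}\mathcal U^*_k$. *)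

(* Defs.v *)
(* Matroids on E = 'I_n (ground set linearly ordered by the
   natural order on ordinals), given by their family of independent sets. *)
From mathcomp Require Import all_boot all_order all_algebra.
Set Implicit Arguments. Unset Strict Implicit. Unset Printing Implicit Defensive.
Import Order.TTheory GRing.Theory Num.Theory.

Section Matroid.
Variable n : nat.
Notation E := 'I_n.
Variable indep : {set {set E}}.

Definition is_matroid : Prop :=
  [/\ set0 \in indep,
      (forall A B : {set E}, B \in indep -> A \subset B -> A \in indep) &
      (forall A B : {set E}, A \in indep -> B \in indep -> #|A| < #|B| ->
         exists2 e, e \in B :\: A & e |: A \in indep)].

Definition mrank (X : {set E}) : nat := \max_(A in indep | A \subset X) #|A|.

Definition mcl (X : {set E}) : {set E} := [set e | mrank (e |: X) == mrank X].

Definition is_flat (F : {set E}) : bool := mcl F == F.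

(* X is k-closed (k an integer; for k < 0 every set is k-closed) *)
Definition kclosed (k : int) (X : {set E}) : bool :=
  [forall Y : {set E}, ((Y \subset X) && (Posz #|Y| <= k)%R) ==> (mcl Y \subset X)].

Definition clk (k : int) (X : {set E}) : {set E} :=
  \bigcap_(Z : {set E} | kclosed k Z && (X \subset Z)) Z.

End Matroid.

(* graded lexicographic (strict) order: X ≺ Y iff |X| < |Y|, or |X| = |Y| and
   min(X △ Y) ∈ X (which forces X ≠ Y). *)
Definition glex_lt (n : nat) (X Y : {set 'I_n}) : bool :=
  (#|X| < #|Y|) ||
  ((#|X| == #|Y|) &&
   [exists e, (e \in X :\: Y) &&
      [forall f, (f \in (X :\: Y) :|: (Y :\: X)) ==> (val e <= val f)]]).

Definition is_Ustar (n : nat) (indep : {set {set 'I_n}}) (F U : {set 'I_n}) : Prop :=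
  clk indep (Posz (mrank indep F) - 1)%R U = F /\
  forall V : {set 'I_n}, clk indep (Posz (mrank indep F) - 1)%R V = F ->
    V = U \/ glex_lt U V.

Definition in_Ustar (n : nat) (indep : {set {set 'I_n}}) (U : {set 'I_n}) : Prop :=
  exists k : nat, [/\ k < mrank indep setT &
    exists F : {set 'I_n}, [/\ is_flat indep F, mrank indep F = k,
                              is_Ustar indep F U & k < #|U| ]].

(* Main.v *)
Require Import Defs.
From mathcomp Require Import all_boot all_order all_algebra.
From mathcomp Require Import zify.
Set Implicit Arguments. Unset Strict Implicit. Unset Printing Implicit Defensive.
Import Order.TTheory GRing.Theory Num.Theory.

Section S.
Variable n : nat.
Variable indep : {set {set 'I_n}}.
Hypothesis Hm : is_matroid indep.

Lemma rank_mono (X Y : {set 'I_n}) : X \subset Y -> mrank indep X <= mrank indep Y.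
Proof.
move=> XY; apply/bigmax_leqP => A /andP[HA HAX].
by apply: leq_bigmax_cond; rewrite HA (subset_trans HAX).
Qed.

Lemma rank_ge (A X : {set 'I_n}) : A \in indep -> A \subset X -> #|A| <= mrank indep X.
Proof. by move=> HA HAX; apply: leq_bigmax_cond; rewrite HA HAX. Qed.

Lemma rank_indep (A : {set 'I_n}) : A \in indep -> mrank indep A = #|A|.
Proof.
move=> HA; apply/eqP; rewrite eqn_leq rank_ge // andbT.
by apply/bigmax_leqP => B /andP[_ HB]; apply: subset_leq_card.
Qed.

Lemma clk_sub (a : int) (X : {set 'I_n}) : X \subset clk indep a X.
Proof. by apply/bigcapsP => Z /andP[_ H]. Qed.

Lemma clk_min (a : int) (X Z : {set 'I_n}) : kclosed indep a Z -> X \subset Z -> clk indep a X \subset Z.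
Proof. by move=> H1 H2; apply: bigcap_inf; rewrite H1 H2. Qed.

Lemma clk_closed (a : int) (X : {set 'I_n}) : kclosed indep a (clk indep a X).
Proof.
apply/forallP => Y; apply/implyP => /andP[HY Ha].
apply/bigcapsP => Z /andP[HZ HXZ].
move/forallP: (HZ) => /(_ Y) /implyP; apply; rewrite Ha andbT.
apply: (subset_trans HY); apply: bigcap_inf; by rewrite HZ HXZ.
Qed.

Lemma kclosed_le (a b : int) (Z : {set 'I_n}) : (a <= b)%R -> kclosed indep b Z -> kclosed indep a Z.
Proof.
move=> ab /forallP H; apply/forallP => Y; apply/implyP => /andP[HY Ha].
apply: (implyP (H Y)); rewrite HY /=; exact: le_trans Ha ab.
Qed.

Lemma drop_el (a : int) (X : {set 'I_n}) u (Y : {set 'I_n}) : u \in X -> Y \subset X :\ u -> (Posz #|Y| <= a)%R ->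
  u \in mcl indep Y -> clk indep a (X :\ u) = clk indep a X.
Proof.
move=> uX YX Ya uY; apply/eqP; rewrite eqEsubset; apply/andP; split.
  apply: clk_min; first exact: clk_closed.
  exact: subset_trans (subD1set _ _) (clk_sub _ _).
apply: clk_min; first exact: clk_closed.
have H1 := clk_sub a (X :\ u).
have H2 : mcl indep Y \subset clk indep a (X :\ u).
  move/forallP: (clk_closed a (X :\ u)) => /(_ Y) /implyP; apply.
  by rewrite Ya (subset_trans YX H1).
apply/subsetP => x xX; case: (x =P u) => [->|/eqP xu].
  exact: (subsetP H2).
by apply: (subsetP H1); rewrite in_setD1 xu.
Qed.

Lemma circuit (X : {set 'I_n}) : X \notin indep ->
  exists u, exists2 Y : {set 'I_n}, [/\ u \in X, Y \subset X :\ u, Y \in indep & u \in mcl indep Y]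
     & #|Y| <= mrank indep X.
Proof.
case: Hm => H0 Hsub _ HX.
have ex : exists m, [exists C : {set 'I_n}, [&& C \subset X, C \notin indep & #|C| == m]].
  by exists #|X|; apply/existsP; exists X; rewrite subxx HX eqxx.
case: (ex_minnP ex) => m /existsP[C /and3P[CX Cd /eqP Cm]] Hmin.
have Cne : C != set0 by apply: contraNneq Cd => ->.
case/set0Pn: Cne => u uC.
have Yi : C :\ u \in indep.
  apply/negPn/negP => Hd.
  have := Hmin #|C :\ u|; rewrite -Cm.
  have -> : [exists C0 : {set 'I_n}, [&& C0 \subset X, C0 \notin indep & #|C0| == #|C :\ u|]].
    by apply/existsP; exists (C :\ u); rewrite Hd eqxx (subset_trans (subD1set _ _) CX).
  by move=> /(_ isT); rewrite (cardsD1 u C) uC; lia.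
exists u; exists (C :\ u).
  split=> //; first exact: (subsetP CX).
    by apply: setSD.
  rewrite inE setD1K // (rank_indep Yi); apply/eqP; apply/eqP; rewrite eqn_leq; apply/andP; split; last first.
    by rewrite -(rank_indep Yi); apply: rank_mono; apply: subD1set.

  apply/bigmax_leqP => A /andP[HA HAC].
  have : A \proper C by rewrite properEneq HAC andbT; apply: contraNneq Cd => <-.
  by move/proper_card; rewrite (cardsD1 u C) uC; lia.
apply: rank_ge Yi _; exact: subset_trans (subD1set _ _) CX.
Qed.

Lemma no_drop (U F : {set 'I_n}) u (Y : {set 'I_n}) : is_Ustar indep F U -> u \in U -> Y \subset U :\ u ->
  (Posz #|Y| <= Posz (mrank indep F) - 1)%R -> u \in mcl indep Y -> False.
Proof.
move=> [HF Hmin] uU YU Ya uY.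
have := Hmin (U :\ u); rewrite (drop_el uU YU Ya uY) HF => /(_ erefl).
rewrite /glex_lt (cardsD1 u U) uU.
case=> [E|]; first by move: uU; rewrite -E !inE eqxx.
by case/orP; [lia | case/andP; lia].
Qed.

End S.

Theorem lemma5p2 (n : nat) (indep : {set {set 'I_n}}) :
  is_matroid indep ->
  forall U V : {set 'I_n}, in_Ustar indep U -> in_Ustar indep V ->
    U \subset V -> U = V.
Proof.
move=> Hm U V [k [_ [F [HfF HkF HUF kU]]]] [l [_ [G [HfG HlG HVG lV]]]] UV.
have UinF : U \subset F by case: HUF => <- _; apply: clk_sub.
have VinG : V \subset G by case: HVG => <- _; apply: clk_sub.
have rU : mrank indep U <= k by rewrite -HkF; apply: rank_mono.
have rV : mrank indep V <= l by rewrite -HlG; apply: rank_mono.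
have rUV := rank_mono indep UV.
have Ud : U \notin indep.
  by apply/negP => /rank_indep E; move: rU; rewrite E; lia.
case: (circuit Hm Ud) => u [Y [uU YU _ uY] Yr].
case: (ltnP #|Y| l) => Yl.
  apply: False_ind; apply: (no_drop HVG (subsetP UV u uU) (Y := Y)) => //.
    apply: (subset_trans YU); exact: setSD.
  by rewrite HlG; lia.
case: (ltnP #|Y| k) => Yk.
  apply: False_ind; apply: (no_drop HUF uU YU) => //; rewrite HkF; lia.
have kl : k = l by lia.
rewrite -kl in HlG.
have [HU HUmin] := HUF.
have [HV HVmin] := HVG.
have FG : F \subset G.
  rewrite -HU; apply: clk_min; last exact: subset_trans UV VinG.
  by rewrite -HV HlG -HkF; apply: clk_closed.
have VF : V \subset F.
  apply/subsetP => v vV; move/eqP: HfF => <-; rewrite inE.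
  rewrite eqn_leq [X in _ && X]rank_mono ?subsetUr // andbT HkF.
  rewrite -HlG; apply: rank_mono; rewrite subUset sub1set FG andbT.
  exact: (subsetP VinG).
have GF : G \subset F.
  rewrite -HV; apply: clk_min => //.
  by rewrite -HU HlG -HkF; apply: clk_closed.
have EFG : F = G by apply/eqP; rewrite eqEsubset FG GF.
have := HVmin U; rewrite HlG -HkF HU EFG => /(_ erefl) [//|].
rewrite /glex_lt; case/orP.
  by have := subset_leq_card UV; lia.
case/andP=> /eqP Ec _; apply/eqP; rewrite eqEcard UV Ec leqnn //.
Qed.
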